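(* Let $G=(\mathcal{V},\mathcal{C})$, and let $G^M_0=(\mathcal{V}^M_0,\mathcal{E}^M_0)$ with $\mathcal{V}^M_0=\{v: v\subseteq c\text{ for some }c\in\mathcal{C}\}$ and $\mathcal{E}^M_0=\{(c\to s): c,s\in\mathcal{V}^M_0,\ s\subsetneq c\}$. Let $\mathcal{C}_m=\{c\in\mathcal{C}:\ \text{there is no }\hat c\in\mathcal{C}\text{ with }c\subsetneq\hat c\}$ be the set of maximal clusters and $\mathcal{I}_m=\{c\cap c': c,c'\in\mathcal{C}_m\}$. Then every $v\in\mathcal{V}^M_0\setminus(\mathcal{C}\cup\mathcal{I}_m)$ is a redundant node w.r.t. $G^M_0$.
   Context: $\mathcal{V}=\{1,\dots,n\}$, each $x_i$ ranges over a finite set, $\mathbf{x}_s=(x_i)_{i\in s}$; $\mathcal{C}$ is a collection of subsets of $\mathcal{V}$. A marginal polytope diagram of $G=(\mathcal{V},\mathcal{C})$ is a pair $G^M=(\mathcal{V}^M,\mathcal{E}^M)$ with $\mathcal{C}\subseteq\mathcal{V}^M\subseteq 2^{\mathcal{V}}$ and $\mathcal{E}^M$ a set of directed edges $(c\to s)$ with $c,s\in\mathcal{V}^M$, $s\subseteq c$ ($G^M_0$ is one). For a set $E$ of pairs $(c\to s)$ with $s\subseteq c$, let $P(E)$ be the set of families $\boldsymbol\mu=(\mu_c)_{c\in\mathcal{C}}$ of real functions $\mu_c(\mathbf{x}_c)$ for which there exist real functions $\mu_w(\mathbf{x}_w)$ for all other subsets $w\subseteq\mathcal{V}$ with $\sum_{\mathbf{x}_{c\setminus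 s}}\mu_c(\mathbf{x}_c)=\mu_s(\mathbf{x}_s)$ for all $(c\to s)\in E$, $\mathbf{x}_s$. A node $v\in\mathcal{V}^M\setminus\mathcal{C}$ is redundant w.r.t. $G^M$ if $P(\mathcal{E}^M)=P(\hat{\mathcal{E}}^M)$, where $\hat{\mathcal{E}}^M=\big[\mathcal{E}^M\setminus(\{(c\to v)\in\mathcal{E}^M\}\cup\{(v\to s)\in\mathcal{E}^M\})\big]\cup\{(c\to s):(c\to v)\in\mathcal{E}^M,(v\to s)\in\mathcal{E}^M\}$. *)

(* Defs.v *)
From HB Require Import structures.
From mathcomp Require Import all_boot all_order all_algebra.
From mathcomp Require Import reals.
Set Implicit Arguments. Unset Strict Implicit. Unset Printing Implicit Defensive.
Import Order.TTheory GRing.Theory Num.Theory.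
Local Open Scope ring_scope.

(* Variables are 'I_n (= {1,...,n} shifted); variable i ranges over the
   finite set D i.  A full configuration assigns a value to each variable. *)
Definition conf (n : nat) (D : 'I_n -> finType) :=
  {dffun forall i : 'I_n, D i}.

(* A "real function of x_s" is encoded as a function of full configurations
   that only depends on the coordinates in s. *)
Definition local (R : realType) (n : nat) (D : 'I_n -> finType)
  (s : {set 'I_n}) (f : conf D -> R) : Prop :=
  forall x y : conf D, (forall i, i \in s -> x i = y i) -> f x = f y.

(* Marginalisation constraint for an edge (c -> s):
   sum_{x_{c\s}} mu_c(x_c) = mu_s(x_s) for all x_s. *)
Definition marg_ok (R : realType) (n : nat) (D : 'I_n -> finType)
  (nu : {set 'I_n} -> conf D -> R) (c s : {set 'I_n}) : Prop :=
  forall x : conf D,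
    \sum_(y : conf D | [forall i, (i \notin c :\: s) ==> (y i == x i)]) nu c y
    = nu s x.

Definition inP (R : realType) (n : nat) (D : 'I_n -> finType)
  (C : {set {set 'I_n}}) (E : {set {set 'I_n} * {set 'I_n}})
  (mu : {set 'I_n} -> conf D -> R) : Prop :=
  (forall c, c \in C -> local c (mu c)) /\
  exists nu : {set 'I_n} -> conf D -> R,
    (forall w, local w (nu w)) /\
    (forall c, c \in C -> nu c = mu c) /\
    (forall e, e \in E -> marg_ok nu e.1 e.2).

Definition hatE (n : nat) (E : {set {set 'I_n} * {set 'I_n}}) (v : {set 'I_n})
  : {set {set 'I_n} * {set 'I_n}} :=
  [set e in E | (e.2 != v) && (e.1 != v)] :|:
  [set (e1.1, e2.2) | e1 in E, e2 in E & (e1.2 == v) && (e2.1 == v)].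

Definition redundant (R : realType) (n : nat) (D : 'I_n -> finType)
  (C : {set {set 'I_n}}) (VM : {set {set 'I_n}})
  (E : {set {set 'I_n} * {set 'I_n}}) (v : {set 'I_n}) : Prop :=
  v \in VM :\: C /\
  forall mu : {set 'I_n} -> conf D -> R, inP C E mu <-> inP C (hatE E v) mu.

Definition V0 (n : nat) (C : {set {set 'I_n}}) : {set {set 'I_n}} :=
  [set v : {set 'I_n} | [exists c in C, v \subset c]].

Definition E0 (n : nat) (C : {set {set 'I_n}}) : {set {set 'I_n} * {set 'I_n}} :=
  [set e | [&& e.1 \in V0 C, e.2 \in V0 C & e.2 \proper e.1]].

Definition Cmax (n : nat) (C : {set {set 'I_n}}) : {set {set 'I_n}} :=
  [set c in C | ~~ [exists c' in C, c \proper c']].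

Definition Imax (n : nat) (C : {set {set 'I_n}}) : {set {set 'I_n}} :=
  [set c :&: c' | c in Cmax C, c' in Cmax C].

(* Main.v *)
Require Import Defs.
From HB Require Import structures.
From mathcomp Require Import all_boot all_order all_algebra.
From mathcomp Require Import reals.
Set Implicit Arguments. Unset Strict Implicit. Unset Printing Implicit Defensive.
Import Order.TTheory GRing.Theory Num.Theory.
Local Open Scope ring_scope.

Definition glue n (D : 'I_n -> finType) (A : {set 'I_n}) (y x : conf D) : conf D :=
  [ffun i => if i \in A then y i else x i].

Lemma glueE n (D : 'I_n -> finType) (A : {set 'I_n}) (y x : conf D) i :
  glue A y x i = if i \in A then y i else x i.
Proof. by rewrite ffunE. Qed.

Definition pf n (D : 'I_n -> finType) (A : {set 'I_n}) (x y : conf D) : bool :=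
  [forall i, (i \notin A) ==> (y i == x i)].

Lemma pfP n (D : 'I_n -> finType) (A : {set 'I_n}) (x y : conf D) :
  reflect (forall i, i \notin A -> y i = x i) (pf A x y).
Proof.
apply: (iffP forallP) => H i.
  by move=> Hi; move: (H i); rewrite Hi => /eqP.
by apply/implyP => Hi; apply/eqP; apply: H.
Qed.

Ltac fin := repeat match goal with
 | H : is_true true -> _ |- _ => specialize (H isT)
 | H : is_true false |- _ => discriminate H
 | H : true = false |- _ => discriminate H
 end; try congruence.

Lemma marg_trans (R : realType) n (D : 'I_n -> finType) (F : conf D -> R)
  (s v c : {set 'I_n}) (x : conf D) : s \subset v -> v \subset c ->
  \sum_(y | pf (c:\:s) x y) F y =
  \sum_(z | pf (v:\:s) x z) \sum_(y | pf (c:\:v) z y) F y.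
Proof.
move=> sv vc.
rewrite (partition_big (fun y => glue (v:\:s) y x) (pf (v:\:s) x)); last first.
  move=> y _; apply/pfP => i; rewrite glueE; by case: ifP.
apply: eq_bigr => z /pfP Hz; apply: eq_bigl => y.
apply/idP/idP.
- case/andP => /pfP Hy /eqP Hg; apply/pfP => i.
  have Hgi : glue (v :\: s) y x i = z i by rewrite Hg.
  move: Hgi (Hy i) (Hz i) (subsetP sv i) (subsetP vc i); rewrite glueE !inE.
  case: (i \in s); case: (i \in v); case: (i \in c) => /=; intros; fin.
- move=> /pfP Hy; apply/andP; split.
    apply/pfP => i.
    move: (Hy i) (Hz i) (subsetP sv i) (subsetP vc i); rewrite !inE.
    case: (i \in s); case: (i \in v); case: (i \in c) => /=; intros; fin.
  apply/eqP/ffunP => i; rewrite glueE.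
  move: (Hy i) (Hz i) (subsetP sv i) (subsetP vc i); rewrite !inE.
  case: (i \in s); case: (i \in v); case: (i \in c) => /=; intros; fin.
Qed.

Lemma marg_local (R : realType) n (D : 'I_n -> finType) (F : conf D -> R)
  (c s : {set 'I_n}) : local c F ->
  local s (fun x => \sum_(y | pf (c:\:s) x y) F y).
Proof.
move=> HF x x' Hxx' /=.
rewrite (reindex_onto (fun j => glue (c:\:s) j x) (fun i => glue (c:\:s) i x')); last first.
  move=> y /pfP Hy; apply/ffunP => i; rewrite !glueE.
  move: (Hy i); case: (i \in c :\: s) => //= H; by rewrite H.
apply: eq_big => y.
  apply/idP/idP.
    case/andP => _ /eqP Hg; apply/pfP => i Hi.
    by rewrite -Hg glueE (negbTE Hi).
  move=> /pfP Hy; apply/andP; split.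
    by apply/pfP => i Hi; rewrite glueE (negbTE Hi).
  apply/eqP/ffunP => i; rewrite !glueE.
  case: (boolP (i \in c :\: s)) => Hi /=; first by []. by rewrite Hy.
case/andP => _ /eqP Hg.
have Hy : forall i, i \notin c :\: s -> y i = x' i.
  by move=> i Hi; rewrite -Hg glueE (negbTE Hi).
apply: HF => i Hi; rewrite glueE.
case: (boolP (i \in c :\: s)) => //= Hi'.
rewrite Hy //; apply: Hxx'.
by move: Hi'; rewrite !inE Hi andbT negbK.
Qed.

Lemma margE (R : realType) n (D : 'I_n -> finType)
  (nu : {set 'I_n} -> conf D -> R) c s :
  marg_ok nu c s = forall x, \sum_(y | pf (c:\:s) x y) nu c y = nu s x.
Proof. by []. Qed.

Lemma exmax n (C : {set {set 'I_n}}) c : c \in C ->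
  exists2 c1, c1 \in Cmax C & c \subset c1.
Proof.
move=> cC.
have cS : c \in [set c1 in C | c \subset c1] by rewrite inE cC subxx.
case: (arg_maxnP (fun c1 : {set 'I_n} => #|c1|) cS) => c1 /setIdP [c1C cc1] Hmax.
exists c1 => //.
rewrite /Cmax inE c1C /=; apply/negP => /existsP [c' /andP [c'C pr]].
have h : c' \in [set c1 in C | c \subset c1].
  by rewrite inE c'C (subset_trans cc1 (proper_sub pr)).
have := Hmax c' h.
move=> H; have H2 : (#|c'| <= #|c1|)%N := H. by have := leq_trans (proper_card pr) H2; rewrite ltnn.
Qed.

Lemma inV0 n (C : {set {set 'I_n}}) c : c \in C -> c \in V0 C.
Proof. by move=> cC; rewrite /V0 inE; apply/existsP; exists c; rewrite cC subxx. Qed.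

Lemma inE0 n (C : {set {set 'I_n}}) a b :
  a \in V0 C -> b \in V0 C -> b \proper a -> (a, b) \in E0 C.
Proof. by move=> *; rewrite /E0 inE /=; apply/and3P. Qed.

Theorem proposition11 (R : realType) (n : nat) (D : 'I_n -> finType)
  (C : {set {set 'I_n}}) (v : {set 'I_n}) :
  v \in V0 C :\: (C :|: Imax C) ->
  redundant R D C (V0 C) (E0 C) v.
Proof.
rewrite !inE => /andP [/norP [vNC vNI] vV0].
have vV0' : v \in V0 C by rewrite /V0 inE.
split; first by rewrite in_setD vNC vV0'.
move=> mu; split.
- case=> Hloc [nu [Hnl [HnC HE]]]; split=> //; exists nu; split=> //; split=> //.
  move=> e /setUP [].
    by rewrite inE => /andP [HeE _]; apply: HE.
  case/imset2P => e1 e2 He1; rewrite inE => /andP [He2 /andP [/eqP h1 /eqP h2]] ->.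
  move: (HE _ He1) (HE _ He2).
  move: He1 He2; rewrite /E0 !inE => /and3P [_ _ p1] /and3P [_ _ p2].
  case: e1 h1 p1 => [c v1] /= -> p1; case: e2 h2 p2 => [v2 s] /= -> p2.
  rewrite !margE /= => H1 H2 x.
  rewrite (marg_trans _ _ (proper_sub p2) (proper_sub p1)).
  rewrite -H2; apply: eq_bigr => z _; exact: H1.
- case=> Hloc [nu [Hnl [HnC HE]]]; split=> //.
  case/existsP: vV0 => c /andP [cC vc].
  case: (exmax cC) => c0 c0M cc0.
  have c0C : c0 \in C by move: c0M; rewrite /Cmax inE => /andP [].
  have vc0 : v \subset c0 := subset_trans vc cc0.
  have c0v : c0 != v by apply: contraNneq vNC => <-.
  have c0V0 := inV0 c0C.
  have hat1 : forall e, e \in E0 C -> e.1 != v -> e.2 != v -> e \in hatE (E0 C) v.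
    move=> e He h1 h2; apply/setUP; left; by rewrite inE He h1 h2.
  pose M a x := \sum_(y | pf (a:\:v) x y) nu a y.
  have Msub : forall a b, a \in V0 C -> b \in V0 C -> v \subset a -> a != v ->
      a \subset b -> forall x, M a x = M b x.
    move=> a b aV bV va av ab x.
    case: (eqVneq a b) => [-> //|nab].
    have bv : b != v.
      apply: contra_neq av => bv; apply/eqP; rewrite eqEsubset va andbT.
      by rewrite -bv.
    have Hab : marg_ok nu b a.
      apply: (HE (b, a)); apply: hat1 => //=.
      by apply: inE0 => //; rewrite properEneq nab.
    rewrite /M (marg_trans _ _ va ab); apply: eq_bigr => z _.
    by rewrite margE in Hab; rewrite Hab.
  have Mc0 : forall a, a \in V0 C -> v \subset a -> a != v -> forall x, M a x = M c0 x.
    move=> a aV va av x.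
    move: (aV); rewrite /V0 inE => /existsP [c2 /andP [c2C ac2]].
    case: (exmax c2C) => c1 c1M c2c1.
    have c1C : c1 \in C by move: c1M; rewrite /Cmax inE => /andP [].
    have ac1 := subset_trans ac2 c2c1.
    have wI : c1 :&: c0 \in Imax C by apply/imset2P; exists c1 c0.
    have wv : c1 :&: c0 != v by apply/eqP => wv; move: vNI; rewrite -wv wI.
    have vw : v \subset c1 :&: c0 by rewrite subsetI (subset_trans va ac1) vc0.
    have wV : c1 :&: c0 \in V0 C.
      by rewrite /V0 inE; apply/existsP; exists c0; rewrite c0C subsetIr.
    rewrite (Msub a c1) // ?inV0 //.
    rewrite -(Msub (c1 :&: c0) c1) // ?inV0 ?subsetIl //.
    by rewrite (Msub (c1 :&: c0) c0) // subsetIr.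
  exists (fun w => if w == v then M c0 else nu w); split; [|split].
  + move=> w; case: eqP => [->|_]; last exact: Hnl.
    exact: marg_local (Hnl c0).
  + move=> c3 c3C /=; have c3v : c3 != v by apply: contraNneq vNC => <-.
    by rewrite (negbTE c3v) HnC.
  + case=> a b He; move: (He); rewrite /E0 inE /= => /and3P [aV bV ba].
    rewrite margE /= => x.
    case: (eqVneq a v) => [av|av]; case: (eqVneq b v) => [bv|bv].
    * by move: ba; rewrite av bv properxx.
    * subst a; rewrite /M.
      rewrite -(marg_trans _ _ (proper_sub ba) vc0).
      have Hc : marg_ok nu c0 b.
        apply: (HE (c0, b)); apply/setUP; right; apply/imset2P.
        exists (c0, v) (v, b) => //.
          by apply: inE0 => //; rewrite properEneq eq_sym c0v.
        by rewrite inE He !eqxx.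
      by rewrite margE in Hc; rewrite Hc.
    * subst b.
      by apply: Mc0 => //; exact: proper_sub ba.
    *       have := HE (a, b) (hat1 _ He av bv); rewrite margE; exact.
Qed.
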